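(* For every $t\in\mathbb{N}$ there exists $n_0(t)$ such that for all $n\ge n_0(t)$ the following holds. Let $\mathcal{F}\subseteq\mathcal{M}_{2n}$ be a $t$-intersecting family. For any distinct vertices $i,j,k$ of $K_{2n}$, \[|\mathcal{F}\!\downarrow_{ij}|\cdot|\mathcal{F}\!\downarrow_{ik}|\le\big((2(n-t-1)-1)!!\big)^2.\]
   Context: $\mathcal{M}_{2n}$ is the set of perfect matchings of $K_{2n}$. A family $\mathcal{F}$ is $t$-intersecting if $|m\cap m'|\ge t$ for all $m,m'\in\mathcal{F}$. For an edge $ij$, $\mathcal{F}\!\downarrow_{ij}=\{m\in\mathcal{F}: \{i,j\}\in m\}$. $(2k-1)!!=1\cdot3\cdots(2k-1)$. *)

(* Defs.v *)
From mathcomp Require Import all_boot.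
Set Implicit Arguments. Unset Strict Implicit. Unset Printing Implicit Defensive.

Definition is_edge (N : nat) (e : {set 'I_N}) : bool := #|e| == 2.

Definition perfect_matching (N : nat) (m : {set {set 'I_N}}) : bool :=
  [forall e in m, is_edge e] &&
  [forall v : 'I_N, #|[set e in m | v \in e]| == 1].

Definition t_intersecting (N t : nat) (F : {set {set {set 'I_N}}}) : bool :=
  [forall m in F, forall m' in F, t <= #|m :&: m'|].

Definition restrict_edge (N : nat) (F : {set {set {set 'I_N}}}) (i j : 'I_N)
  : {set {set {set 'I_N}}} := [set m in F | [set i; j] \in m].

(* odd_dfact k = (2k-1)!! = 1 * 3 * ... * (2k-1), with (-1)!! = 1 *)
Definition odd_dfact (k : nat) : nat := \prod_(i < k) (2 * i + 1).

(* Main.v *)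
Require Import Defs.
From mathcomp Require Import all_boot.
From mathcomp Require Import zify.

Lemma AE a b rho Cn Ft K : a <= rho -> b <= Cn * Ft -> 8 * rho * (K + Cn) <= Ft -> a * b <= Ft * Ft.
Proof.
move=> ha hb h.
have h1 : rho * Cn <= Ft by nia.
apply: leq_trans (leq_mul ha hb) _; rewrite mulnA leq_mul2r h1 orbT //.
Qed.

Lemma AC2 a b rho x Ft K Cn : a <= Ft + rho -> b <= x + rho -> 3 * x <= 2 * Ft ->
  8 * rho * (K + Cn) <= Ft -> 0 < K -> a * b <= Ft * Ft.
Proof.
move=> ha hb hx h K0.
have r8 : 8 * rho <= Ft by nia.
apply: leq_trans (leq_mul ha hb) _.
have e1 : 3 * (x * Ft) <= 2 * (Ft * Ft) by nia.
have e2 : 8 * (rho * Ft) <= Ft * Ft by nia.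
have e3 : 8 * (x * rho) <= x * Ft by nia.
have e4 : 8 * (rho * rho) <= rho * Ft by nia.
nia.
Qed.

Lemma AD a b rho Ft K Cn L F1 : a <= K * (L * F1) + rho -> b <= K * Ft + rho ->
  4 * K * K * L * F1 <= Ft -> 8 * rho * (K + Cn) <= Ft -> 0 < K -> a * b <= Ft * Ft.
Proof.
move=> ha hb hz h K0.
set Z := K * (L * F1).
have z4 : 4 * (K * Z) <= Ft by rewrite /Z; nia.
have r8 : 8 * rho <= Ft by nia.
have rK : 8 * (rho * K) <= Ft by nia.
apply: leq_trans (leq_mul ha hb) _.
have e1 : 4 * (Z * (K * Ft)) <= Ft * Ft by nia.
have zF : 4 * Z <= Ft by nia.
have e2 : 32 * (Z * rho) <= Ft * Ft by nia.
have e3 : 8 * (rho * (K * Ft)) <= Ft * Ft by nia.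
have e4 : 64 * (rho * rho) <= Ft * Ft by nia.
nia.
Qed.

Set Implicit Arguments. Unset Strict Implicit. Unset Printing Implicit Defensive.


Lemma card_bigcup_le (T I : finType) (P : pred I) (G : I -> {set T}) :
  #|\bigcup_(i | P i) G i| <= \sum_(i | P i) #|G i|.
Proof.
apply: (big_ind2 (fun (U : {set T}) s => #|U| <= s)).
- by rewrite cards0.
- move=> U1 s1 U2 s2 h1 h2. apply: leq_trans (leq_card_setU _ _) _. exact: leq_add.
- by [].
Qed.

Lemma card_cover (T I : finType) (X : {set T}) (P : pred I) (G : I -> {set T}) :
  (forall x, x \in X -> exists2 i, P i & x \in G i) -> #|X| <= \sum_(i | P i) #|G i|.
Proof.
move=> h; apply: leq_trans (card_bigcup_le P G).
apply: subset_leq_card; apply/subsetP=> x /h [i Pi xi].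
by apply/bigcupP; exists i.
Qed.

Lemma exists_sub_card (T : finType) (S : {set T}) t :
  t <= #|S| -> exists2 U : {set T}, U \subset S & #|U| = t.
Proof.
elim: t => [|t IH] h.
  by exists set0; rewrite ?sub0set ?cards0.
have [U US cU] := IH (ltnW h).
have : U \proper S by rewrite properEcard US cU h.
case/properP=> _ [x xS xU].
exists (x |: U); first by rewrite subUset sub1set xS US.
by rewrite cardsU1 xU cU.
Qed.

Lemma odd_dfactS k : odd_dfact k.+1 = odd_dfact k * (2 * k + 1).
Proof. by rewrite /odd_dfact big_ord_recr. Qed.

Lemma odd_dfact_gt0 k : 0 < odd_dfact k.
Proof. elim: k => [|k IH]; first by rewrite /odd_dfact big_ord0.
rewrite odd_dfactS muln_gt0 IH; lia. Qed.

Lemma odd_dfact_mono a b : a <= b -> odd_dfact a <= odd_dfact b.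
Proof.
move=> /subnKC <-; elim: (b - a) => [|d IH]; first by rewrite addn0.
rewrite addnS odd_dfactS; apply: leq_trans IH _; apply: leq_pmulr; lia.
Qed.

Lemma bin_le_exp m t : 'C(m, t) <= m ^ t.
Proof.
have h : 'C(m, t) <= 'C(m, t) * t`! by apply: leq_pmulr; apply: fact_gt0.
apply: leq_trans h _; rewrite bin_ffact ffact_prod.
apply: leq_trans (leq_prod (fun (i : 'I_t) _ => leq_subr i m)) _.
by rewrite prod_nat_const card_ord.
Qed.

Lemma card_coverS (T I : finType) (X : {set T}) (B : {set I}) (G : I -> {set T}) :
  (forall x, x \in X -> exists2 i, i \in B & x \in G i) -> #|X| <= \sum_(i in B) #|G i|.
Proof. exact: card_cover. Qed.


Section Match.
Variable n : nat.
Local Notation V := ('I_(2 * n)).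

Definition cnt (W : {set {set V}}) : nat :=
  #|[set m : {set {set V}} | perfect_matching m & W \subset m]|.

Lemma pm_edge (m : {set {set V}}) e : perfect_matching m -> e \in m -> #|e| = 2.
Proof. by case/andP=> /forallP h _ em; move: (h e); rewrite em /= /is_edge => /eqP. Qed.

Lemma pm_uniq (m : {set {set V}}) e1 e2 v : perfect_matching m -> e1 \in m -> e2 \in m ->
  v \in e1 -> v \in e2 -> e1 = e2.
Proof.
case/andP=> _ /forallP /(_ v) /cards1P [x hx] e1m e2m v1 v2.
have : e1 \in [set e in m | v \in e] by rewrite inE e1m v1.
have : e2 \in [set e in m | v \in e] by rewrite inE e2m v2.
by rewrite hx !inE => /eqP -> /eqP ->.
Qed.

Lemma pm_cov (m : {set {set V}}) v : perfect_matching m -> exists2 e, e \in m & v \in e.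
Proof.
case/andP=> _ /forallP /(_ v) /cards1P [x hx].
have : x \in [set e in m | v \in e] by rewrite hx set11.
by rewrite inE => /andP [xm vx]; exists x.
Qed.

Lemma pm_triv (m : {set {set V}}) : perfect_matching m -> trivIset m.
Proof.
move=> pm; apply/trivIsetP => e1 e2 e1m e2m ne.
apply/pred0P => v /=; apply/negP => /andP [v1 v2].
by move/negP: ne; apply; apply/eqP; apply: (pm_uniq pm e1m e2m v1 v2).
Qed.

Lemma cover_sub (m W : {set {set V}}) : perfect_matching m -> W \subset m -> #|cover W| = 2 * #|W|.
Proof.
move=> pm Wm.
have /eqP <- := trivIsetS Wm (pm_triv pm).
rewrite (eq_bigr (fun _ => 2)); last by move=> e eW; apply: (pm_edge pm); apply: (subsetP Wm).
by rewrite sum_nat_const mulnC.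
Qed.

Lemma pm_card (m : {set {set V}}) : perfect_matching m -> #|m| = n.
Proof.
move=> pm; have := cover_sub pm (subxx m).
have -> : cover m = setT.
  apply/setP=> v; rewrite inE; have [e em ve] := pm_cov v pm.
  by apply/bigcupP; exists e.
rewrite cardsT card_ord; lia.
Qed.

Lemma cnt_aux k : forall W : {set {set V}}, n - #|W| = k -> cnt W <= odd_dfact k.
Proof.
elim: k => [|k IH] W hk.
  rewrite /odd_dfact big_ord0.
  apply: leq_trans (_ : #|[set W]| <= 1); last by rewrite cards1.
  apply: subset_leq_card; apply/subsetP=> m; rewrite !inE => /andP [pm Wm].
  rewrite eq_sym eqEcard Wm (pm_card pm) /=. by move/eqP: hk; rewrite subn_eq0.
rewrite /cnt; have [->|[m0]] := set_0Vmem [set m : {set {set V}} | perfect_matching m & W \subset m].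
  by rewrite cards0.
rewrite inE => /andP [pm0 Wm0].
have cW := cover_sub pm0 Wm0.
have cC : #|~: cover W| = (2 * k + 1).+1.
  rewrite cardsCs setCK card_ord cW; set w := #|W| in hk *; lia.
have : 0 < #|~: cover W| by rewrite cC.
case/card_gt0P=> v; rewrite inE => vW.
pose U := (~: cover W) :\ v.
have cU : #|U| = 2 * k + 1 by move: cC; rewrite (cardsD1 v) in_setC vW add1n => -[].
have key : forall u, u \in U -> cnt (W :|: [set [set v; u]]) <= odd_dfact k.
  move=> u uU; apply: IH.
  have nvW : [set v; u] \notin W.
    apply/negP => h; move/negP: vW; apply; apply/bigcupP; exists [set v; u] => //.
    by rewrite !inE eqxx.
  rewrite setUC cardsU1 nvW add1n; set w := #|W| in hk *; lia.
apply: leq_trans (card_cover (P := mem U)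
  (G := fun u => [set m : {set {set V}} | perfect_matching m & (W :|: [set [set v; u]]) \subset m]) _) _.
  move=> m; rewrite inE => /andP [pm Wm].
  have [e em ve] := pm_cov v pm.
  have [u [uv eu]] : exists u, u != v /\ e = [set v; u].
    have /cards2P [x [y [xy exy]]] : #|e| == 2 by rewrite (pm_edge pm em).
    move: ve; rewrite exy !inE => /orP [] /eqP vx.
      by exists y; rewrite vx eq_sym.
    by exists x; rewrite vx setUC.
  exists u; last by rewrite inE pm subUset Wm sub1set -eu em.
  rewrite /U !inE uv /=; apply/negP => /bigcupP [w wW uw].
  have ew : w = e by apply: (pm_uniq pm (subsetP Wm _ wW) em uw); rewrite eu !inE eqxx orbT.
  by move/negP: vW; apply; apply/bigcupP; exists w => //; rewrite ew.
apply: leq_trans (_ : \sum_(u in U) odd_dfact k <= _).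
  by apply: leq_sum => u uU; apply: key.
by rewrite sum_nat_const cU odd_dfactS mulnC.
Qed.

Lemma cnt_bound (W : {set {set V}}) : cnt W <= odd_dfact (n - #|W|).
Proof. exact: cnt_aux. Qed.

End Match.


Section Defs3.
Variable n : nat.
Local Notation V := ('I_(2 * n)).
Local Notation E := {set V}.
Local Notation M := {set {set V}}.
Local Notation Fam := {set {set {set V}}}.

Definition rsub (X : Fam) (S : M) : Fam := [set x in X | S \subset x].
Definition inDom (L : nat) (i j k : V) (S : M) : bool :=
  [&& #|S| <= L, [set i; j] \notin S & [set i; k] \notin S].
Definition good (L R : nat) (X : Fam) (b : E) (P : Fam) (S : M) : bool :=
  [&& P \subset X, P != set0, [forall p in P, S \subset p], #|S| < L &
      [forall e : E, (e \notin S) ==> (e != b) ==> (#|[set p in P | e \in p]| * R <= #|P|)]].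
Definition Ker (L R : nat) (F : Fam) (i j k : V) : {set M} :=
  [set S : M | inDom L i j k S && [exists P : Fam, good L R (restrict_edge F i j) [set i; j] P S]].
Definition Yset (L R : nat) (F : Fam) (i j k : V) : Fam :=
  [set a in restrict_edge F i j | [forall S in Ker L R F i j k, ~~ (S \subset a)]].

Lemma pm_notik (m : M) (i j k : V) : perfect_matching m -> i != k -> j != k ->
  [set i; j] \in m -> [set i; k] \notin m.
Proof.
move=> pm ik jk ijm; apply/negP => ikm.
have h := pm_uniq pm ijm ikm (setU11 i _) (setU11 i _).
have : k \in [set i; j] by rewrite h !inE eqxx orbT.
by rewrite !inE => /orP [] /eqP kk; [move: ik; rewrite kk eqxx | move: jk; rewrite kk eqxx].
Qed.

End Defs3.

Section OneSide.
Variables (n t L R : nat).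
Local Notation V := ('I_(2 * n)).
Local Notation E := {set V}.
Local Notation M := {set {set V}}.
Local Notation Fam := {set {set {set V}}}.
Variables (F : Fam) (i j k : V).
Hypothesis hpm : forall m, m \in F -> perfect_matching m.
Hypothesis hti : t_intersecting t F.
Hypothesis hij : i != j.
Hypothesis hik : i != k.
Hypothesis hjk : j != k.
Hypothesis hR : n + L < R.

Local Notation A := (restrict_edge F i j).

Lemma inA a : a \in A -> [/\ a \in F, perfect_matching a & [set i; j] \in a].
Proof. by rewrite inE => /andP [aF ija]; split => //; apply: hpm. Qed.

Lemma notikA a : a \in A -> [set i; k] \notin a.
Proof. by case/inA => _ pm ija; apply: pm_notik pm hik hjk ija. Qed.

Lemma famA_bound (X : Fam) (S : M) : X \subset A -> (forall x, x \in X -> S \subset x) ->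
  [set i; j] \notin S -> #|X| <= odd_dfact (n - #|S|.+1).
Proof.
move=> XA XS ijS.
apply: leq_trans (_ : cnt ([set i; j] |: S) <= _); last first.
  by apply: leq_trans (cnt_bound _) _; rewrite cardsU1 ijS add1n.
apply: subset_leq_card; apply/subsetP => x xX.
have [_ pm ijx] := inA (subsetP XA x xX).
by rewrite inE pm subUset sub1set ijx XS.
Qed.

Lemma Rem : #|Yset L R F i j k| <= odd_dfact (n - L.+1) * R ^ L.
Proof.
set Y := Yset L R F i j k.
have YA : Y \subset A by apply/subsetP => y; rewrite inE => /andP [].
have YK : forall p, p \in Y -> [forall S in Ker L R F i j k, ~~ (S \subset p)].
  by move=> p; rewrite inE => /andP [].
clearbody Y.
pose w (S : M) := #|rsub Y S| * R ^ #|S|.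
have D0 : inDom L i j k set0 by rewrite /inDom cards0 !inE.
have [S DS Smax] := arg_maxnP w D0.
have wY : #|Y| <= w S.
  have := Smax set0 D0; rewrite /w cards0 expn0 muln1.
  have -> : rsub Y set0 = Y by apply/setP => y; rewrite inE sub0set andbT.
  by [].
have R0 : 0 < R by lia.
move: DS; rewrite /inDom => /and3P [SL ijS ikS].
case: (ltnP #|S| L) => hS; last first.
  have eL : #|S| = L by lia.
  apply: leq_trans wY _; rewrite /w eL leq_mul2r; apply/orP; right.
  have := famA_bound (X := rsub Y S) (S := S) _ _ ijS; rewrite eL; apply.
    by apply/subsetP => x; rewrite inE => /andP [xY _]; apply: (subsetP YA).
  by move=> x; rewrite inE => /andP [].
case: (posnP #|Y|) => [->|Ypos]; first by [].
exfalso.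
set P := rsub Y S.
have Pne : P != set0.
  rewrite -card_gt0; move: (leq_trans Ypos wY); rewrite /w muln_gt0 => /andP [] //.
have goodP : good L R A [set i; j] P S.
  apply/and5P; split => //.
  - by apply/subsetP => x; rewrite inE => /andP [xY _]; apply: (subsetP YA).
  - by apply/forallP => p; apply/implyP; rewrite inE => /andP [].
  apply/forallP => e; apply/implyP => eS; apply/implyP => eij.
  case: (eqVneq e [set i; k]) => [->|eik].
    have -> : [set p in P | [set i; k] \in p] = set0.
      apply/setP => p; rewrite in_set0; apply/negP; rewrite in_set => /andP [pP ikp].
      have pY : p \in Y by move: pP; rewrite /P /rsub in_set => /andP [].
      by move: (notikA (subsetP YA p pY)); rewrite ikp.
    by rewrite cards0.
  have De : inDom L i j k (e |: S).
    apply/and3P; split; first by rewrite cardsU1 eS add1n.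
      by rewrite in_setU1 negb_or eq_sym eij ijS.
    by rewrite in_setU1 negb_or eq_sym eik ikS.
  have := Smax _ De; rewrite /w cardsU1 eS add1n expnS mulnA.
  have -> : rsub Y (e |: S) = [set p in P | e \in p].
    apply/setP => p; rewrite !inE subUset sub1set.
    by case: (p \in Y); case: (e \in p); case: (S \subset p).
  by rewrite /= leq_pmul2r ?expn_gt0 ?R0.
have SK : S \in Ker L R F i j k.
  rewrite inE /inDom SL ijS ikS /=; apply/existsP; exists P; exact: goodP.
move: Pne; rewrite -card_gt0 => /card_gt0P [p].
rewrite inE => /andP [pY Sp].
move: (YK p pY) => /forallP /(_ S).
by rewrite SK Sp.
Qed.

Lemma card_sub_sum (T : finType) (X : {set T}) (c : pred T) :
  #|[set x in X | c x]| = \sum_(x in X) (c x : nat).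
Proof.
rewrite -sum1_card big_mkcond /= [RHS]big_mkcond /=.
apply: eq_bigr => x _; rewrite inE; by case: (x \in X); case: (c x).
Qed.

Lemma Cross (S S' : M) : S \in Ker L R F i j k -> S' \in Ker L R F i k j -> t <= #|S :&: S'|.
Proof.
rewrite !inE => /andP [/and3P [SL ijS ikS] /existsP [P gP]] /andP [/and3P [S'L ikS' ijS'] /existsP [Q gQ]].
move: gP => /and5P [PA Pne PS SlL /forallP Psp].
move: gQ => /and5P [QB Qne QS S'lL /forallP Qsp].
have PF : forall p, p \in P -> p \in F /\ [set i; j] \in p.
  by move=> p pP; have := subsetP PA p pP; rewrite inE => /andP [].
have QF : forall q, q \in Q -> q \in F /\ [set i; k] \in q.
  by move=> q qQ; have := subsetP QB q qQ; rewrite inE => /andP [].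
case: (boolP [exists p in P, exists q in Q, (p :&: q) \subset (S :&: S')]).
  case/existsP => p /andP [pP /existsP [q /andP [qQ pq]]].
  have [pF _] := PF p pP; have [qF _] := QF q qQ.
  move: hti; rewrite /t_intersecting => /forallP /(_ p) /implyP /(_ pF) /forallP /(_ q) /implyP /(_ qF) h.
  by apply: leq_trans h _; apply: subset_leq_card.
move=> hneg; exfalso.
have bad : forall p q, p \in P -> q \in Q -> exists2 e, e \in p :&: q & e \notin S :&: S'.
  move=> p q pP qQ; move/existsPn: hneg => /(_ p); rewrite pP /= => /existsPn /(_ q); rewrite qQ /=.
  by case/subsetPn => e h1 h2; exists e.
have step1 : forall q, q \in Q -> #|P| <=
    \sum_(e in q :\: S) #|[set p in P | e \in p]| +
    #|[set p in P | [exists e in S :\: S', (e \in p) && (e \in q)]]|.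
  move=> q qQ.
  rewrite -(cardsID [set p in P | [exists e in S :\: S', (e \in p) && (e \in q)]] P) addnC.
  apply: leq_add.
    apply: card_cover => p; rewrite in_setD => /andP [notPq pP].
    have [e] := bad p q pP qQ; rewrite in_setI => /andP [ep eq] eSS.
    exists e; last by rewrite inE pP ep.
    rewrite in_setD eq andbT; apply/negP => eS.
    move/negP: notPq; apply; rewrite inE pP /=; apply/existsP; exists e.
    by rewrite in_setD eS ep eq !andbT; move: eSS; rewrite in_setI eS andTb.
  by apply: subset_leq_card; apply/subsetP => p; rewrite in_setI => /andP [].
have sum1 : R * (\sum_(q in Q) \sum_(e in q :\: S) #|[set p in P | e \in p]|) <= n * (#|Q| * #|P|).
  have -> : n * (#|Q| * #|P|) = \sum_(q in Q) (n * #|P|) by rewrite sum_nat_const mulnCA.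
  rewrite big_distrr /=.
  apply: leq_sum => q qQ; rewrite big_distrr /=.
  apply: leq_trans (_ : \sum_(e in q :\: S) #|P| <= _).
    apply: leq_sum => e; rewrite in_setD => /andP [eS eq].
    have [_ ikq] := QF q qQ.
    have eij : e != [set i; j].
      apply/negP => /eqP ee; move: eq; rewrite ee => ijq.
      have [qF _] := QF q qQ.
      have kj : k != j by rewrite eq_sym.
      by move: (pm_notik (hpm qF) hij kj ikq); rewrite ijq.
    by rewrite mulnC; move: (Psp e); rewrite eS eij.
  rewrite sum_nat_const leq_mul2r; apply/orP; right.
  have [qF _] := QF q qQ.
  apply: leq_trans (_ : #|q| <= _); first by apply: subset_leq_card; apply: subsetDl.
  by rewrite (pm_card (hpm qF)).
have sum2 : R * (\sum_(q in Q) #|[set p in P | [exists e in S :\: S', (e \in p) && (e \in q)]]|)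
    <= L * (#|P| * #|Q|).
  under eq_bigr => q _ do rewrite card_sub_sum.
  rewrite exchange_big /=.
  have -> : L * (#|P| * #|Q|) = \sum_(p in P) (L * #|Q|) by rewrite sum_nat_const mulnCA.
  rewrite big_distrr /=; apply: leq_sum => p pP.
  rewrite -(card_sub_sum Q (fun q => [exists e in S :\: S', (e \in p) && (e \in q)])).
  apply: leq_trans (_ : R * (\sum_(e in S :\: S') #|[set q in Q | e \in q]|) <= _).
    rewrite leq_mul2l; apply/orP; right.
    apply: card_cover => q; rewrite inE => /andP [qQ /existsP [e /andP [eSS /andP [ep eq]]]].
    by exists e => //; rewrite inE qQ eq.
  rewrite big_distrr /=.
  apply: leq_trans (_ : \sum_(e in S :\: S') #|Q| <= _).
    apply: leq_sum => e; rewrite in_setD => /andP [eS' eS].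
    have eik : e != [set i; k] by apply/negP => /eqP ee; move: ikS; rewrite -ee eS.
    by rewrite mulnC; move: (Qsp e); rewrite eS' eik.
  rewrite sum_nat_const leq_mul2r; apply/orP; right.
  apply: leq_trans (_ : #|S| <= L) => //.
  by apply: subset_leq_card; apply: subsetDl.
have tot : R * (#|Q| * #|P|) <= n * (#|Q| * #|P|) + L * (#|P| * #|Q|).
  apply: leq_trans (_ : R * (\sum_(q in Q) (\sum_(e in q :\: S) #|[set p in P | e \in p]| +
    #|[set p in P | [exists e in S :\: S', (e \in p) && (e \in q)]]|)) <= _).
    rewrite leq_mul2l; apply/orP; right.
    rewrite -sum_nat_const; apply: leq_sum => q qQ; exact: step1.
  rewrite big_split /= mulnDr; exact: leq_add sum1 sum2.
have P0 : 0 < #|P| by rewrite card_gt0.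
have Q0 : 0 < #|Q| by rewrite card_gt0.
move: tot; rewrite [#|P| * #|Q|]mulnC -mulnDl leq_mul2r => /orP [|].
  by rewrite muln_eq0 => /orP [] /eqP h; [move: Q0 | move: P0]; rewrite h.
by move=> h; move: hR; rewrite ltnNge h.
Qed.

Lemma KerP (S : M) : S \in Ker L R F i j k ->
  [/\ #|S| < L, [set i; j] \notin S & [set i; k] \notin S].
Proof.
rewrite inE => /andP [/and3P [_ ijS ikS] /existsP [P /and5P [_ _ _ SL _]]].
by split.
Qed.

Lemma decomp a : a \in A -> a \notin Yset L R F i j k ->
  exists2 S, S \in Ker L R F i j k & S \subset a.
Proof.
move=> aA; rewrite inE aA /= => /forallPn [S]; rewrite negb_imply negbK => /andP [SK Sa].
by exists S.
Qed.

Lemma TB (X : Fam) (S0 : M) : X \subset A -> [set i; j] \notin S0 ->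
  (forall x, x \in X -> exists2 T : M, (T \subset S0) && (#|T| == t) & T \subset x) ->
  #|X| <= 'C(#|S0|, t) * odd_dfact (n - t.+1).
Proof.
move=> XA ijS0 h.
apply: leq_trans (card_coverS (B := [set T : M | T \subset S0 & #|T| == t])
   (G := fun T => [set x in X | T \subset x]) _) _.
  by move=> x xX; have [T hT Tx] := h x xX; exists T; rewrite ?inE ?xX.
rewrite -cards_draws -sum_nat_const; apply: leq_sum => T; rewrite inE => /andP [TS0 /eqP cT].
rewrite -cT; apply: famA_bound.
- by apply/subsetP => x; rewrite inE => /andP [xX _]; apply: (subsetP XA).
- by move=> x; rewrite inE => /andP [].
by apply/negP => ijT; move/negP: ijS0; apply; apply: (subsetP TS0).
Qed.

Lemma EXT (X : Fam) (T : M) (G : {set E}) : X \subset A -> [set i; j] \notin T -> #|T| = t ->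
  [set i; j] \notin G ->
  (forall x, x \in X -> exists2 e, (e \in G) && (e \notin T) & (e |: T) \subset x) ->
  #|X| <= #|G| * odd_dfact (n - t.+2).
Proof.
move=> XA ijT cT ijG h.
apply: leq_trans (card_coverS (B := G :\: T)
   (G := fun e => [set x in X | (e |: T) \subset x]) _) _.
  by move=> x xX; have [e he ex] := h x xX; exists e; rewrite ?inE ?xX // andbC.
apply: leq_trans (_ : \sum_(e in G :\: T) odd_dfact (n - t.+2) <= _).
  apply: leq_sum => e; rewrite in_setD => /andP [eT eG].
  have -> : t.+2 = #|e |: T|.+1 by rewrite cardsU1 eT cT.
  apply: famA_bound.
  - by apply/subsetP => x; rewrite inE => /andP [xX _]; apply: (subsetP XA).
  - by move=> x; rewrite inE => /andP [].
  rewrite in_setU1 negb_or ijT andbT; apply/negP => /eqP ee; move/negP: ijG; apply; by rewrite ee.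
rewrite sum_nat_const leq_mul2r; apply/orP; right.
by apply: subset_leq_card; apply: subsetDl.
Qed.

Lemma TB2 (X : Fam) (S0 : M) (g : M -> {set E}) : X \subset A -> [set i; j] \notin S0 ->
  (forall T, [set i; j] \notin g T) -> (forall T, #|g T| <= L) ->
  (forall x, x \in X -> exists2 T : M, (T \subset S0) && (#|T| == t) &
      exists2 e, (e \in g T) && (e \notin T) & (e |: T) \subset x) ->
  #|X| <= 'C(#|S0|, t) * (L * odd_dfact (n - t.+2)).
Proof.
move=> XA ijS0 gij gL h.
apply: leq_trans (card_coverS (B := [set T : M | T \subset S0 & #|T| == t])
   (G := fun T => [set x in X | [exists e, [&& e \in g T, e \notin T & (e |: T) \subset x]]]) _) _.
  move=> x xX; have [T hT [e he ex]] := h x xX; exists T; rewrite ?inE ?xX //=.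
  by apply/existsP; exists e; move/andP: he => [he1 he2]; rewrite he1 he2 ex.
rewrite -cards_draws -sum_nat_const; apply: leq_sum => T; rewrite inE => /andP [TS0 /eqP cT].
apply: leq_trans (_ : #|g T| * odd_dfact (n - t.+2) <= _); last by rewrite leq_mul2r gL orbT.
apply: (EXT (T := T) (G := g T)) => //.
- by apply/subsetP => x; rewrite inE => /andP [xX _]; apply: (subsetP XA).
- by apply/negP => ijT; move/negP: ijS0; apply; apply: (subsetP TS0).
move=> x; rewrite inE => /andP [_ /existsP [e /and3P [e1 e2 e3]]].
by exists e; rewrite ?e1 ?e2.
Qed.

End OneSide.


Lemma expn_mono m1 m2 e : m1 <= m2 -> m1 ^ e <= m2 ^ e.
Proof. by move=> h; elim: e => // e IH; rewrite !expnS leq_mul. Qed.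

Lemma PE a b c d x : d.+1 * (c * (a * d.+1 + b) ^ d) <= x -> c * (a * x + b) ^ d <= 2 ^ x.
Proof.
set D := d.+1; set Y := c * (a * D + b) ^ d => hx.
have D0 : 0 < D by [].
set z := x %/ D.
have zY : Y <= z by rewrite /z leq_divRL // mulnC.
have xz : x < z.+1 * D by rewrite /z ltn_ceil.
have h1 : (z.+1) ^ D <= 2 ^ x.
  apply: leq_trans (_ : (2 ^ z) ^ D <= _).
    by rewrite leq_exp2r //; apply: ltn_expl.
  by rewrite -expnM leq_exp2l // /z leq_divM.
apply: leq_trans h1.
have h2 : a * x + b <= (a * D + b) * z.+1.
  have : a * x <= a * D * z.+1 by rewrite -mulnA leq_mul2l (ltnW _) ?orbT // mulnC.
  move=> h; rewrite mulnDl; apply: leq_add => //.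
  by rewrite -{1}(muln1 b) leq_mul2l orbC.
apply: leq_trans (_ : c * ((a * D + b) * z.+1) ^ d <= _).
  by rewrite leq_mul2l expn_mono ?orbT.
rewrite expnMn mulnA -/Y /D expnS leq_mul2r; apply/orP; right; exact: (leq_trans zY).
Qed.

Lemma odd_dfact_add a m : (2 * a + 1) ^ m * odd_dfact a <= odd_dfact (a + m).
Proof.
elim: m => [|m IH]; first by rewrite expn0 mul1n addn0.
rewrite (addnS a m) odd_dfactS expnS -mulnA [X in X <= _]mulnC.
apply: leq_mul => //; lia.
Qed.

Definition ell n := trunc_log 2 n.
Definition Lp t n := 4 * t * ell n + 9 * t + 8.

Lemma asym t : exists n0, forall n, n0 <= n ->
  [/\ 2 ^ ell n <= n, n < 2 ^ (ell n).+1 & 8 * (Lp t n) ^ (2 * t + 1) <= n].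
Proof.
set d := 2 * t + 1.
exists (2 ^ (d.+1 * (8 * (4 * t * d.+1 + (9 * t + 8)) ^ d))) => n hn.
have n0 : 0 < n by apply: leq_trans hn; rewrite expn_gt0.
have hl := trunc_log_max (isT : 1 < 2) hn.
split; first exact: trunc_logP.
  exact: trunc_log_ltn.
apply: leq_trans (trunc_logP (isT : 1 < 2) n0).
rewrite /Lp -addnA; apply: PE; exact: hl.
Qed.

Section Arith.
Variables t n : nat.
Let l := ell n.
Let L := Lp t n.
Let R := n + L + 1.
Hypothesis h1 : 2 ^ l <= n.
Hypothesis h2 : n < 2 ^ l.+1.
Hypothesis h3 : 8 * L ^ (2 * t + 1) <= n.

Lemma L_ge : 9 * t + 8 <= L.
Proof. rewrite /L /Lp; lia. Qed.

Lemma L_le : 8 * L <= n.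
Proof.
apply: leq_trans h3; rewrite leq_mul2l /=.
by rewrite -{1}(expn1 L) leq_pexp2l //; [ have := L_ge; lia | lia].
Qed.

Lemma F_split : odd_dfact (n - t.+1) = odd_dfact (n - t.+2) * (2 * (n - t.+2) + 1).
Proof.
have := L_ge; have := L_le => hh1 hh2.
have -> : n - t.+1 = (n - t.+2).+1 by lia.
by rewrite odd_dfactS.
Qed.

Lemma M3 : 3 * n * odd_dfact (n - t.+2) <= 2 * odd_dfact (n - t.+1).
Proof.
have := L_ge; have := L_le => hh1 hh2.
rewrite F_split.
have hw : 3 * n <= 2 * (2 * (n - t.+2) + 1) by lia.
move: hw; set w := n - t.+2; set F1 := odd_dfact w => hw.
have := leq_mul hw (leqnn F1); lia.
Qed.

Lemma M2 : 4 * 'C(L, t) * 'C(L, t) * L * odd_dfact (n - t.+2) <= odd_dfact (n - t.+1).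
Proof.
have := L_ge; have := L_le => hh1 hh2.
rewrite F_split [X in _ <= X]mulnC leq_mul2r; apply/orP; right.
have hK := bin_le_exp L t.
apply: leq_trans (_ : 4 * L ^ t * L ^ t * L <= _).
  by apply: leq_mul => //; apply: leq_mul => //; apply: leq_mul.
have -> : 4 * L ^ t * L ^ t * L = 4 * L ^ (2 * t + 1) by rewrite -!mulnA -expnSr -expnD; congr (4 * L ^ _); lia.
move: h3; set P := L ^ (2 * t + 1); lia.
Qed.

Lemma M1 : 8 * (odd_dfact (n - L.+1) * R ^ L) * ('C(L, t) + 'C(n, t)) <= odd_dfact (n - t.+1).
Proof.
have := L_ge; have := L_le => hh1 hh2.
set a := n - L.+1.
set m := 2 * t * l + 4 * t + 4.
have eL : L = t + 2 * m by rewrite /L /Lp /m; lia.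
have e1 : n - t.+1 = a + 2 * m by rewrite /a; lia.
rewrite e1; apply: leq_trans (odd_dfact_add a (2 * m)).
set K := 'C(L, t) + 'C(n, t).
have -> : 8 * (odd_dfact a * R ^ L) * K = (R ^ L * (8 * K)) * odd_dfact a by lia.
rewrite leq_mul2r; apply/orP; right.
have g3 : 3 * R <= 2 * (2 * a + 1) by rewrite /R /a; lia.
have g2 : 2 * (R * R) <= (2 * a + 1) ^ 2.
  have := leq_mul g3 g3; rewrite mulnACA (mulnACA 2) expnS expn1; lia.
have KC : K <= 2 * R ^ t.
  have A1 : n ^ t <= R ^ t by apply: expn_mono; rewrite /R; lia.
  have A2 : L ^ t <= R ^ t by apply: expn_mono; rewrite /R; lia.
  have := bin_le_exp L t; have := bin_le_exp n t; rewrite /K; lia.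
have hR4 : R <= 4 * 2 ^ l by move: h2; rewrite expnS /R; lia.
have hRR : R * R <= 2 ^ (2 * l + 4).
  apply: leq_trans (leq_mul hR4 hR4) _.
  by rewrite mulnACA -expnD addnn -mul2n (expnD 2 _ 4) mulnC.
have hRt : R ^ t * R ^ t <= 2 ^ (4 * t + 2 * t * l).
  rewrite -expnMn; apply: leq_trans (expn_mono t hRR) _.
  by rewrite -expnM; apply: leq_pexp2l => //; lia.
have step1 : R ^ L * (8 * K) <= 16 * (R * R) ^ m * (R ^ t * R ^ t).
  have -> : R ^ L = R ^ t * (R * R) ^ m by rewrite eL expnD expnM.
  have : 8 * K <= 16 * R ^ t by lia.
  move: (R ^ t) (R * R) => x y h.
  have := leq_mul (leqnn (x * y ^ m)) h; lia.
apply: leq_trans step1 _.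
apply: leq_trans (_ : 16 * (R * R) ^ m * 2 ^ (4 * t + 2 * t * l) <= _).
  by apply: leq_mul.
have e16 : 16 * 2 ^ (4 * t + 2 * t * l) = 2 ^ m by rewrite /m -(expnD 2 4) mulnC; congr (2 ^ _); lia.
rewrite mulnAC e16 -expnMn expnM; exact: expn_mono g2.
Qed.
End Arith.


Lemma ext_elem (T0 : finType) (T U W : {set T0}) t :
  #|T| = t -> ~~ (T \subset W) -> t <= #|U :&: W| -> exists2 e, e \in U :&: W & e \notin T.
Proof.
move=> cT nTW h.
case: (boolP (U :&: W \subset T)) => [sub|/subsetPn [e h1 h2]]; last by exists e.
have : U :&: W \subset T :&: W by rewrite subsetI sub subsetIr.
move/subset_leq_card => h'.
have : T :&: W \proper T.
  rewrite properEneq subsetIl andbT; apply/negP => /eqP e.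
  by move/negP: nTW; apply; rewrite -e subsetIr.
move/proper_card; lia.
Qed.

Lemma sub_t (T0 : finType) (U W : {set T0}) t :
  t <= #|U :&: W| -> exists2 T : {set T0}, (T \subset W) && (#|T| == t) & T \subset U.
Proof.
move=> h; have [T TUW cT] := exists_sub_card h.
exists T; last by apply: subset_trans TUW (subsetIl _ _).
by rewrite (subset_trans TUW (subsetIr _ _)) cT eqxx.
Qed.

Section Bounds.
Variables (n t : nat).
Local Notation V := ('I_(2 * n)).
Local Notation E := {set V}.
Local Notation M := {set {set V}}.
Local Notation Fam := {set {set {set V}}}.
Variables (F : Fam) (i j k : V).
Hypothesis hpm : forall m, m \in F -> perfect_matching m.
Hypothesis hti : t_intersecting t F.
Hypothesis hij : i != j.
Hypothesis hik : i != k.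
Hypothesis hjk : j != k.
Let L := Lp t n.
Let R := n + L + 1.
Let rho := odd_dfact (n - L.+1) * R ^ L.
Local Notation A := (restrict_edge F i j).
Local Notation B := (restrict_edge F i k).
Local Notation KA := (Ker L R F i j k).
Local Notation KB := (Ker L R F i k j).
Local Notation YA := (Yset L R F i j k).

Let hR : n + L < R. Proof. rewrite /R; lia. Qed.
Let hkj : k != j. Proof. by rewrite eq_sym. Qed.

Lemma tint a b : a \in A -> b \in B -> t <= #|a :&: b|.
Proof.
rewrite !inE => /andP [aF _] /andP [bF _].
by move: hti => /forallP /(_ a) /implyP /(_ aF) /forallP /(_ b) /implyP /(_ bF).
Qed.

Lemma bY : #|A| <= #|A :\: YA| + rho.
Proof.
rewrite -(cardsID YA A) addnC leq_add2l.
apply: leq_trans (Rem hpm hti hij hik hjk hR).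
by apply: subset_leq_card; apply: subsetIr.
Qed.

Lemma AmY a : a \in A :\: YA -> exists2 S, S \in KA & S \subset a.
Proof. by rewrite in_setD => /andP [aY aA]; apply: decomp. Qed.

Lemma subAY : A :\: YA \subset A.
Proof. exact: subsetDl. Qed.

Lemma b_crude b0 : b0 \in B -> #|A| <= 'C(n, t) * odd_dfact (n - t.+1).
Proof.
move=> b0B.
have [b0F pb0 ikb0] := inA hpm b0B.
apply: leq_trans (_ : 'C(#|b0|, t) * odd_dfact (n - t.+1) <= _); last by rewrite (pm_card pb0).
apply: (TB (X := A) (S0 := b0) hpm (subxx _)).
  exact: pm_notik pb0 hij hkj ikb0.
by move=> a aA; apply: sub_t; apply: tint.
Qed.

Lemma b_ker S0 : S0 \in KB -> #|A| <= 'C(L, t) * odd_dfact (n - t.+1) + rho.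
Proof.
move=> S0K; have [S0L _ ijS0] := KerP S0K.
apply: leq_trans bY _; rewrite leq_add2r.
apply: leq_trans (_ : 'C(#|S0|, t) * odd_dfact (n - t.+1) <= _).
  apply: (TB (X := A :\: YA) (S0 := S0) hpm subAY ijS0) => a /AmY [S SK Sa].
  have := Cross hpm hti hij hjk hR SK S0K => /sub_t [T h1 h2].
  by exists T => //; apply: subset_trans h2 Sa.
by rewrite leq_mul2r leq_bin2l ?orbT // ltnW.
Qed.

Lemma b_C (T : M) : #|T| = t -> [set i; j] \notin T -> (forall S, S \in KA -> T \subset S) ->
  #|A| <= odd_dfact (n - t.+1) + rho.
Proof.
move=> cT ijT hT; apply: leq_trans bY _; rewrite leq_add2r -cT.
apply: (famA_bound (X := A :\: YA) (S := T) hpm subAY _ ijT) => a /AmY [S /hT TS Sa]; exact: subset_trans TS Sa.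
Qed.

Lemma b_Call (T : M) : #|T| = t -> [set i; j] \notin T -> (forall a, a \in A -> T \subset a) ->
  #|A| <= odd_dfact (n - t.+1).
Proof. move=> cT ijT hT; rewrite -cT; exact: (famA_bound (X := A) (S := T) hpm (subxx _) hT ijT). Qed.

Lemma b_C2 (T : M) b : #|T| = t -> [set i; j] \notin T -> (forall S, S \in KA -> T \subset S) ->
  b \in B -> ~~ (T \subset b) -> #|A| <= n * odd_dfact (n - t.+2) + rho.
Proof.
move=> cT ijT hT bB Tb; apply: leq_trans bY _; rewrite leq_add2r.
have [bF pb ikb] := inA hpm bB.
apply: leq_trans (_ : #|b| * odd_dfact (n - t.+2) <= _); last by rewrite (pm_card pb).
apply: (EXT (X := A :\: YA) (T := T) (G := b) hpm subAY ijT cT).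
  exact: pm_notik pb hij hkj ikb.
move=> a aAY; have [S /hT TS Sa] := AmY aAY.
have aA : a \in A by move: aAY; rewrite in_setD => /andP [].
have [e] := ext_elem cT Tb (tint aA bB).
rewrite in_setI => /andP [ea eb] eT; exists e; first by rewrite eb eT.
by rewrite subUset sub1set ea (subset_trans TS Sa).
Qed.

Lemma b_D1 (T : M) S' : #|T| = t -> [set i; j] \notin T -> (forall S, S \in KA -> T \subset S) ->
  S' \in KB -> ~~ (T \subset S') -> #|A| <= L * odd_dfact (n - t.+2) + rho.
Proof.
move=> cT ijT hT S'K TS'; apply: leq_trans bY _; rewrite leq_add2r.
have [S'L _ ijS'] := KerP S'K.
apply: leq_trans (_ : #|S'| * odd_dfact (n - t.+2) <= _); last by rewrite leq_mul2r ltnW ?orbT.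
apply: (EXT (X := A :\: YA) (T := T) (G := S') hpm subAY ijT cT ijS').
move=> a aAY; have [S SK Sa] := AmY aAY; have TS := hT S SK.
have [e] := ext_elem cT TS' (Cross hpm hti hij hjk hR SK S'K).
rewrite in_setI => /andP [eS eS'] eT; exists e; first by rewrite eS' eT.
by rewrite subUset sub1set (subsetP Sa _ eS) (subset_trans TS Sa).
Qed.

Lemma b_D2 S0 : S0 \in KB -> (forall T : M, #|T| = t -> exists2 S, S \in KB & ~~ (T \subset S)) ->
  #|A| <= 'C(L, t) * (L * odd_dfact (n - t.+2)) + rho.
Proof.
move=> S0K hK; apply: leq_trans bY _; rewrite leq_add2r.
have [S0L _ ijS0] := KerP S0K.
pose g (T : M) := odflt set0 [pick S in KB | ~~ (T \subset S)].
have gK : forall T : M, #|T| = t -> g T \in KB /\ ~~ (T \subset g T).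
  move=> T cT; rewrite /g; case: pickP => [S /andP [SK TS] | none] //=.
  by have [S SK TS] := hK T cT; move: (none S); rewrite SK TS.
apply: leq_trans (_ : 'C(#|S0|, t) * (L * odd_dfact (n - t.+2)) <= _); last first.
  by rewrite leq_mul2r leq_bin2l ?orbT // ltnW.
apply: (TB2 (X := A :\: YA) (S0 := S0) (g := g) hpm subAY ijS0).
- move=> T; rewrite /g; case: pickP => [S /andP [SK _] | _] /=; last by rewrite inE.
  by have [_ _ ->] := KerP SK.
- move=> T; rewrite /g; case: pickP => [S /andP [SK _] | _] /=; last by rewrite cards0.
  by have [/ltnW -> _ _] := KerP SK.
move=> a /AmY [S SK Sa].
have := Cross hpm hti hij hjk hR SK S0K => /sub_t [T /andP [TS0 /eqP cT] TS].
exists T; first by rewrite TS0 cT eqxx.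
have [gTK TgT] := gK T cT.
have [e] := ext_elem cT TgT (Cross hpm hti hij hjk hR SK gTK).
rewrite in_setI => /andP [eS egT] eT; exists e; first by rewrite egT eT.
by rewrite subUset sub1set (subsetP Sa _ eS) (subset_trans TS Sa).
Qed.

End Bounds.


Theorem mainTheorem20 :
  forall t : nat, exists n0 : nat, forall n : nat, n0 <= n ->
  forall F : {set {set {set 'I_(2 * n)}}},
    (forall m, m \in F -> perfect_matching m) ->
    t_intersecting t F ->
    forall i j k : 'I_(2 * n), i != j -> i != k -> j != k ->
      #|restrict_edge F i j| * #|restrict_edge F i k| <= (odd_dfact (n - t - 1)) ^ 2.
Proof.
move=> t; have [n0 hn0] := asym t; exists n0 => n hn F hpm hti i j k hij hik hjk.
have [h1 h2 h3] := hn0 n hn.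
have m1 := M1 h1 h2 h3; have m2 := M2 h1 h2 h3; have m3 := M3 h1 h2 h3.
rewrite -mulnA in m3.
have K0 : 0 < 'C(Lp t n, t) by rewrite bin_gt0; have := L_ge h1 h2 h3; lia.
have hkj : k != j by rewrite eq_sym.
rewrite -subnDA addn1 -mulnn.
have [A0 | [a0 a0A]] := set_0Vmem (restrict_edge F i j); first by rewrite A0 cards0.
have [B0 | [b0 b0B]] := set_0Vmem (restrict_edge F i k); first by rewrite B0 cards0 muln0.
have [KA0 | [S0 S0K]] := set_0Vmem (Ker (Lp t n) (n + Lp t n + 1) F i j k).
  have hA := bY hpm hti hij hik hjk.
  have e0 : #|restrict_edge F i j :\: Yset (Lp t n) (n + Lp t n + 1) F i j k| = 0.
    apply/eqP; rewrite cards_eq0; apply/eqP/setP => a; rewrite in_set0.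
    by apply/negP => /AmY [S]; rewrite KA0 in_set0.
  rewrite e0 add0n in hA.
  exact: AE hA (b_crude hpm hti hik hkj a0A) m1.
have [KB0 | [S0' S0'K]] := set_0Vmem (Ker (Lp t n) (n + Lp t n + 1) F i k j).
  have hB := bY hpm hti hik hij hkj.
  have e0 : #|restrict_edge F i k :\: Yset (Lp t n) (n + Lp t n + 1) F i k j| = 0.
    apply/eqP; rewrite cards_eq0; apply/eqP/setP => a; rewrite in_set0.
    by apply/negP => /AmY [S]; rewrite KB0 in_set0.
  rewrite e0 add0n in hB.
  rewrite mulnC; exact: AE hB (b_crude hpm hti hij hjk b0B) m1.
have [_ ijS0 ikS0] := KerP S0K.
case: (boolP [exists T : {set {set 'I_(2 * n)}}, [&& #|T| == t,
   [forall S in Ker (Lp t n) (n + Lp t n + 1) F i j k, T \subset S] &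
   [forall S in Ker (Lp t n) (n + Lp t n + 1) F i k j, T \subset S]]]).
  case/existsP => T /and3P [/eqP cT /forallP hTA /forallP hTB].
  have TA : forall S, S \in Ker (Lp t n) (n + Lp t n + 1) F i j k -> T \subset S.
    by move=> S; move/implyP: (hTA S).
  have TB : forall S, S \in Ker (Lp t n) (n + Lp t n + 1) F i k j -> T \subset S.
    by move=> S; move/implyP: (hTB S).
  have ijT : [set i; j] \notin T by apply/negP => /(subsetP (TA _ S0K)); rewrite (negbTE ijS0).
  have ikT : [set i; k] \notin T by apply/negP => /(subsetP (TA _ S0K)); rewrite (negbTE ikS0).
  case: (boolP [exists b in restrict_edge F i k, ~~ (T \subset b)]).
    case/existsP => b /andP [bB Tb].
    have hA := b_C2 hpm hti hij hik hjk cT ijT TA bB Tb.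
    have hB := b_C hpm hti hik hij hkj cT ikT TB.
    rewrite mulnC; exact: AC2 hB hA m3 m1 K0.
  move/existsPn => allB.
  case: (boolP [exists a in restrict_edge F i j, ~~ (T \subset a)]).
    case/existsP => a /andP [aA Ta].
    have hB := b_C2 hpm hti hik hij hkj cT ikT TB aA Ta.
    have hA := b_C hpm hti hij hik hjk cT ijT TA.
    exact: AC2 hA hB m3 m1 K0.
  move/existsPn => allA.
  have allA' : forall a, a \in restrict_edge F i j -> T \subset a.
    by move=> a aA; move: (allA a); rewrite aA /= negbK.
  have allB' : forall b, b \in restrict_edge F i k -> T \subset b.
    by move=> b bB; move: (allB b); rewrite bB /= negbK.
  have hA := b_Call hpm cT ijT allA'.
  have hB := b_Call hpm cT ikT allB'.
  exact: leq_mul.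
move/existsPn => noT.
case: (boolP [exists T : {set {set 'I_(2 * n)}}, (#|T| == t) &&
   [forall S in Ker (Lp t n) (n + Lp t n + 1) F i j k, T \subset S]]).
  case/existsP => T /andP [/eqP cT /forallP hTA].
  have TA : forall S, S \in Ker (Lp t n) (n + Lp t n + 1) F i j k -> T \subset S.
    by move=> S; move/implyP: (hTA S).
  have ijT : [set i; j] \notin T by apply/negP => /(subsetP (TA _ S0K)); rewrite (negbTE ijS0).
  have : ~~ [forall S in Ker (Lp t n) (n + Lp t n + 1) F i k j, T \subset S].
    have fA : [forall S in Ker (Lp t n) (n + Lp t n + 1) F i j k, T \subset S] by apply/forallP.
    by move: (noT T); rewrite cT eqxx fA.
  case/forallPn => S' /=; rewrite negb_imply => /andP [S'K TS'].
  have hA := b_D1 hpm hti hij hik hjk cT ijT TA S'K TS'.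
  have hB := b_ker hpm hti hik hij hkj S0K.
  apply: (AD _ _ _ _ _ _ (Lp t n) (odd_dfact (n - t.+2)) _ hB m2 m1 K0).
  apply: leq_trans hA _; rewrite leq_add2r leq_pmull //.
move/existsPn => noTA.
have hK : forall T : {set {set 'I_(2 * n)}}, #|T| = t ->
    exists2 S, S \in Ker (Lp t n) (n + Lp t n + 1) F i j k & ~~ (T \subset S).
  move=> T cT; move: (noTA T); rewrite cT eqxx /= => /forallPn [S].
  by rewrite negb_imply => /andP [SK TS]; exists S.
have hB := b_D2 hpm hti hik hij hkj S0K hK.
have hA := b_ker hpm hti hij hik hjk S0'K.
rewrite mulnC; exact: (AD _ _ _ _ _ _ (Lp t n) (odd_dfact (n - t.+2)) hB hA m2 m1 K0).
Qed.
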